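(* Let $\mathbb{K}$ be an algebraically closed field of characteristic zero, let $D$ be a derivation of $\mathbb{K}[x,y]$ and let $\rho\in\mathrm{Aut}(D)$. Suppose $\rho(\mathfrak{m})=\mathfrak{m}$ for a maximal ideal $\mathfrak{m}$ of $\mathbb{K}[x,y]$ which is not stable under $D$ (i.e. $D(\mathfrak{m})\not\subseteq\mathfrak{m}$). Then there exists a principal ideal $\mathfrak{a}\subseteq\mathfrak{m}$ (possibly $\mathfrak{a}=(0)$) such that: (a) $D(\mathfrak{a})\subseteq\mathfrak{a}$ and $\rho(\mathfrak{a})=\mathfrak{a}$; (b) $\rho$ induces the identity map on $\mathbb{K}[x,y]/\mathfrak{a}$, i.e. $\rho(g)-g\in\mathfrak{a}$ for all $g\in\mathbb{K}[x,y]$.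
   Context: A derivation of $\mathbb{K}[x,y]$ is a $\mathbb{K}$-linear map $D$ with $D(fg)=gD(f)+fD(g)$. $\mathrm{Aut}(D)$ denotes the group of $\mathbb{K}$-algebra automorphisms $\rho$ of $\mathbb{K}[x,y]$ with $\rho D=D\rho$. *)

(* Defs.v *)
From HB Require Import structures.
From mathcomp Require Import all_boot all_order all_algebra.
From mathcomp Require Export mpoly.
Set Implicit Arguments. Unset Strict Implicit. Unset Printing Implicit Defensive.
Import GRing.Theory.
Local Open Scope ring_scope.

Definition is_ideal (R : comRingType) (I : R -> Prop) : Prop :=
  [/\ I 0, (forall a b, I a -> I b -> I (a + b)) & (forall r a, I a -> I (r * a))].

Definition is_maximal_ideal (R : comRingType) (I : R -> Prop) : Prop :=
  [/\ is_ideal I, ~ I 1 &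
      forall J : R -> Prop, is_ideal J -> (forall a, I a -> J a) ->
        (forall a, J a <-> I a) \/ (forall a, J a)].

Definition principal_ideal (R : comRingType) (f : R) : R -> Prop :=
  fun g => exists h, g = h * f.

Definition image_set (R : Type) (phi : R -> R) (I : R -> Prop) : R -> Prop :=
  fun h => exists g, I g /\ phi g = h.

Definition is_derivation (K : comRingType) (A : comAlgType K)
  (D : {linear A -> A}) : Prop :=
  forall f g : A, D (f * g) = g * D f + f * D g.

(* Main.v *)
Require Import Defs.
From HB Require Import structures.
From mathcomp Require Import all_boot all_order all_algebra.
From mathcomp Require Import mpoly.
From Stdlib Require Import Classical.
From mathcomp Require Import zify ring.
Set Implicit Arguments. Unset Strict Implicit. Unset Printing Implicit Defensive.
Import GRing.Theory.
Local Open Scope ring_scope.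



Lemma cmin (Q : nat -> Prop) : (exists n, Q n) ->
  exists n, Q n /\ forall k, Q k -> (n <= k)%N.
Proof.
case=> n Qn; elim: n {-2}n (leqnn n) Qn => [|N IH] n.
  rewrite leqn0 => /eqP -> Q0; exists 0%N; split => // k _.
move=> le Qn; case: (classic (exists k, Q k /\ (k < n)%N)) => [[k [Qk lt]]|nk].
  apply: (IH k) => //; rewrite -ltnS; exact: leq_trans lt le.
exists n; split => // k Qk; rewrite leqNgt; apply/negP => lt; apply: nk; by exists k.
Qed.

Section SLevel.
Variable K : closedFieldType.
Local Notation S := {poly {poly K}}.

Definition cc (c : K) : S := (c%:P)%:P.
Definition xX : S := ('X : {poly K})%:P.
Definition xt (c : K) : S := ('X - c%:P)%:P.
Definition evx (c : K) (g : S) : {poly K} := map_poly (horner_eval c) g.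
Definition ev (x0 y0 : K) (g : S) : K := (evx x0 g).[y0].

Lemma evxM c : multiplicative (evx c).
Proof. by split => [a b|]; rewrite /evx ?rmorphM ?rmorph1. Qed.
Lemma evxB c a b : evx c (a - b) = evx c a - evx c b.
Proof. by rewrite /evx rmorphB. Qed.
Lemma evxMM c a b : evx c (a * b) = evx c a * evx c b.
Proof. by rewrite /evx rmorphM. Qed.
Lemma evx_xt c : evx c (xt c) = 0.
Proof. by rewrite /evx map_polyC /= /horner_eval hornerXsubC subrr. Qed.
Lemma evx_C c (a : {poly K}) : evx c a%:P = (a.[c])%:P.
Proof. by rewrite /evx map_polyC. Qed.

Lemma evB x0 y0 a b : ev x0 y0 (a - b) = ev x0 y0 a - ev x0 y0 b.
Proof. by rewrite /ev evxB hornerD hornerN. Qed.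
Lemma evD x0 y0 a b : ev x0 y0 (a + b) = ev x0 y0 a + ev x0 y0 b.
Proof. by rewrite /ev /evx rmorphD hornerD. Qed.
Lemma evM x0 y0 a b : ev x0 y0 (a * b) = ev x0 y0 a * ev x0 y0 b.
Proof. by rewrite /ev evxMM hornerM. Qed.
Lemma ev0 x0 y0 : ev x0 y0 0 = 0.
Proof. by rewrite /ev /evx rmorph0 horner0. Qed.
Lemma ev_cc x0 y0 c : ev x0 y0 (cc c) = c.
Proof. by rewrite /ev /cc evx_C hornerC hornerC. Qed.
Lemma ev_xt x0 y0 : ev x0 y0 (xt x0) = 0.
Proof. by rewrite /ev evx_xt horner0. Qed.
Lemma ev_yt x0 y0 : ev x0 y0 ('X - cc y0) = 0.
Proof. by rewrite evB ev_cc /ev /evx map_polyX hornerX subrr. Qed.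

(* coefficientwise factor theorem *)
Lemma fac_x c (g : S) : evx c g = 0 -> exists A, g = xt c * A.
Proof.
move=> h; exists (map_poly (fun a => a %/ ('X - c%:P)) g).
apply/polyP => i; rewrite /xt coefCM coef_map_id0 ?div0p //.
have : (evx c g)`_i = 0 by rewrite h coef0.
rewrite /evx coef_map /= /horner_eval => r.
rewrite mulrC divpK //; by rewrite dvdp_XsubCl /root r.
Qed.

Lemma decomp x0 y0 (g : S) : exists A B,
  g = xt x0 * A + ('X - cc y0) * B + cc (ev x0 y0 g).
Proof.
pose g1 : S := map_poly polyC (evx x0 g).
have [A hA] : exists A, g - g1 = xt x0 * A.
  apply: fac_x; rewrite evxB /g1 /evx -map_poly_comp.
  have -> : map_poly (horner_eval x0 \o polyC) (evx x0 g) = evx x0 g.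
    by apply/polyP => i; rewrite coef_map /= /horner_eval hornerC.
  by rewrite subrr.
have : root (g1 - cc (ev x0 y0 g)) (y0%:P).
  rewrite /root hornerD hornerN hornerC /g1 /cc.
  by rewrite (horner_map (polyC : {rmorphism K -> {poly K}})) /= subrr.
case/factor_theorem => B hB.
exists A, B; rewrite -hA (mulrC _ B) -hB /cc.
by rewrite addrA subrK subrK.
Qed.


End SLevel.
Arguments xX {K}.

Section Ideal.
Variable (R : comRingType) (m : R -> Prop).
Hypothesis hm : is_maximal_ideal m.

Lemma mI : is_ideal m. Proof. by case: hm. Qed.
Lemma m0 : m 0. Proof. by case: mI. Qed.
Lemma mD a b : m a -> m b -> m (a + b). Proof. by case: mI => _ h _; apply: h. Qed.
Lemma mMl r a : m a -> m (r * a). Proof. by case: mI => _ _ h; apply: h. Qed.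
Lemma mMr r a : m a -> m (a * r). Proof. by rewrite mulrC; apply: mMl. Qed.
Lemma mN a : m a -> m (- a). Proof. by move=> h; rewrite -mulN1r; apply: mMl. Qed.
Lemma mB a b : m a -> m b -> m (a - b). Proof. by move=> ha hb; apply: mD => //; apply: mN. Qed.
Lemma m1 : ~ m 1. Proof. by case: hm. Qed.

Lemma m_unit a : ~ m a -> exists s, m (s * a - 1).
Proof.
move=> na; pose J z := exists r s, m r /\ z = r + s * a.
have JI : is_ideal J.
  split; first by exists 0, 0; split; [exact: m0 | rewrite mul0r addr0].
  - move=> _ _ [r1 [s1 [h1 ->]]] [r2 [s2 [h2 ->]]]; exists (r1 + r2), (s1 + s2).
    by split; [apply: mD | rewrite mulrDl addrACA].
  - move=> t _ [r [s [h ->]]]; exists (t * r), (t * s); split; first exact: mMl.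
    by rewrite mulrDr mulrA.
have mJ : forall z, m z -> J z by move=> z hz; exists z, 0; split; rewrite ?mul0r ?addr0.
case: hm => _ _ /(_ J JI mJ) [h|h].
  by case: na; apply/h; exists 0, 1; split; [exact: m0 | rewrite mul1r add0r].
case: (h 1) => r [s [hr e]]; exists s; have -> : s * a - 1 = - r.
  by rewrite e opprD addrCA subrr addr0.
exact: mN.
Qed.

Lemma m_prime a b : m (a * b) -> m a \/ m b.
Proof.
move=> hab; case: (classic (m a)) => ha; [by left|right].
case: (m_unit ha) => s hs.
have -> : b = s * (a * b) - (s * a - 1) * b by rewrite mulrBl mul1r mulrA opprB addrC subrK.
by apply: mB; [apply: mMl | apply: mMr].
Qed.

Lemma m_prod (s : seq R) : m (\prod_(z <- s) z) -> exists z, z \in s /\ m z.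
Proof.
elim: s => [|z s IH]; first by rewrite big_nil => /m1.
rewrite big_cons => /m_prime [h|/IH [w [ws hw]]]; first by exists z; rewrite mem_head.
by exists w; rewrite in_cons ws orbT.
Qed.
End Ideal.

Section Null.
Variable K : closedFieldType.
Hypothesis hchar : [pchar K] =i pred0.
Local Notation S := {poly {poly K}}.
Variable m : S -> Prop.
Hypothesis hm : is_maximal_ideal m.

Lemma m_cc c : c != 0 -> ~ m (cc c).
Proof.
move=> c0 h; apply: (m1 hm); have -> : (1 : S) = cc c^-1 * cc c.
  by rewrite /cc -!polyCM mulVf.
exact: mMl.
Qed.

Lemma natr_injK (i j : nat) : (i%:R : K) = j%:R -> i = j.
Proof.
wlog le : i j / (i <= j)%N => [W|].
  by case: (leqP i j) => [/W //|/ltnW le] /esym /(W _ _ le) ->.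
move=> e; have : ((j - i)%:R : K) = 0 by rewrite natrB // e subrr.
move/eqP; rewrite ((pcharf0P K).1 hchar) subn_eq0 => le2; apply/eqP.
by rewrite eqn_leq le le2.
Qed.

Lemma nonroot (L : {poly K}) : L != 0 -> exists c, ~~ root L c.
Proof.
move=> L0; apply: NNPP => nr.
pose rs := [seq (i%:R : K) | i <- iota 0 (size L)].
have : (size rs < size L)%N.
  apply: max_poly_roots => //.
    apply/allP => c _; apply: contraT => h; case: nr; by exists c.
  rewrite map_inj_uniq ?iota_uniq //; exact: natr_injK.
by rewrite size_map size_iota ltnn.
Qed.


Lemma fac_in_m (F : {rmorphism {poly K} -> S}) (a : {poly K}) :
  (forall c, F c%:P = cc c) -> a != 0 -> m (F a) ->
  exists z, m (F ('X - z%:P)).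
Proof.
move=> FC a0; case: (closed_field_poly_normal a) => r ->.
rewrite -mul_polyC rmorphM FC => /(m_prime hm) [/m_cc|].
  by rewrite lead_coef_eq0 a0 => /(_ isT).
rewrite rmorph_prod -(big_map (fun z => F ('X - z%:P)) xpredT id).
case/(m_prod hm) => w [/mapP [z _ ->] h]; by exists z.
Qed.

Lemma fac_x2 c (g : S) : exists A, g - map_poly polyC (evx c g) = xt c * A.
Proof.
apply: fac_x; rewrite evxB /evx -map_poly_comp.
have -> : map_poly (horner_eval c \o polyC) (evx c g) = evx c g.
  by apply/polyP => i; rewrite coef_map /= /horner_eval hornerC.
by rewrite subrr.
Qed.

Lemma m_nonzero : exists g, m g /\ g != 0.
Proof.
apply: NNPP => h.
have m00 : forall z, m z -> z = 0.
  move=> z hz; apply/eqP; apply: contraT => nz; case: h; by exists z.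
pose J := principal_ideal (xX : S).
have JI : is_ideal J.
  split; first by exists 0; rewrite mul0r.
  - by move=> _ _ [a ->] [b ->]; exists (a + b); rewrite mulrDl.
  - by move=> r _ [a ->]; exists (r * a); rewrite mulrA.
case: hm => _ _ /(_ J JI) [z /m00 ->|h1|h1]; first by exists 0; rewrite mul0r.
  have /m00 : m xX by apply/h1; exists 1; rewrite mul1r.
  by move/eqP; rewrite polyC_eq0 polyX_eq0.
case: (h1 1) => a /(congr1 (ev 0 0)); rewrite evM.
have -> : (1 : S) = cc 1 by [].
rewrite ev_cc /ev /xX /evx map_polyC /= /horner_eval hornerX hornerC mulr0.
by move/eqP; rewrite oner_eq0.
Qed.

Lemma N1 : exists x0, m (xt x0).
Proof.
have ex : exists n, exists g, m g /\ g != 0 /\ size g = n.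
  by case: m_nonzero => g [a b]; exists (size g), g.
have [n [[g [mg [g0 sg]]] nmin]] := cmin ex.
case: (leqP (size g) 1) => sg1.
  have e : g = (g`_0)%:P by apply: size1_polyC.
  have g00 : g`_0 != 0 by apply: contra g0 => /eqP h; rewrite e h.
  have mg' : m (g`_0)%:P by rewrite -e.
  have [z hz] := @fac_in_m polyC (g`_0) (fun c => erefl) g00 mg'.
  by exists z.
have L0 : lead_coef g != 0 by rewrite lead_coef_eq0.
case: (nonroot L0) => c rc; exists c; apply: NNPP => nx.
case: (m_unit hm nx) => s hs.
set h := s * xt c - 1 in hs.
have e := Pdiv.ComRing.rdivp_eq g h.
set k := Pdiv.Ring.rscalp h g in e.
set q := Pdiv.Ring.rdivp h g in e.
set r := Pdiv.Ring.rmodp h g in e.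
have mr : m r.
  have -> : r = (lead_coef g ^+ k)%:P * h - q * g by rewrite mul_polyC e addrC addKr.
  apply: (mB hm); apply: (mMl hm); [exact: hs | exact: mg].
have r0 : r = 0.
  apply/eqP; apply: contraT => rn.
  have := nmin (size r) (ex_intro _ r (conj mr (conj rn erefl))).
  by rewrite leqNgt -sg (Pdiv.Ring.ltn_rmodpN0 _ g0).
move: e; rewrite r0 addr0 -mul_polyC => /(congr1 (evx c)).
rewrite !evxMM /h evxB evxMM evx_xt mulr0 sub0r evx_C.
have -> : evx c 1 = 1 by rewrite /evx rmorph1.
rewrite mulrN1 => /(congr1 (fun p : {poly K} => size p)) /eqP.
rewrite size_opp size_polyC.
have -> : (lead_coef g ^+ k).[c] != 0 by rewrite horner_exp expf_neq0.
rewrite eq_sym size_mul_eq1 => /andP [_].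
rewrite /evx size_map_poly_id0; first by rewrite (gtn_eqF sg1).
done.
Qed.

Lemma N2 x0 : m (xt x0) -> exists y0, m ('X - cc y0).
Proof.
move=> mx; case: (classic (m 'X)) => mX.
  by exists 0; rewrite /cc !polyC0 subr0.
case: (m_unit hm mX) => s hs.
set h := s * 'X - 1 in hs.
have [A hA] := fac_x2 x0 h.
have mw : m (map_poly polyC (evx x0 h)).
  have -> : map_poly polyC (evx x0 h) = h - xt x0 * A by rewrite -hA opprB addrC subrK.
  by apply: (mB hm) => //; apply: (mMr hm).
have w0 : evx x0 h != 0.
  apply/eqP => /(congr1 (fun p : {poly K} => p`_0)).
  rewrite /evx coef_map /= /h coefB coefMX coef1 /= sub0r /horner_eval hornerN hornerC coef0.
  by move/eqP; rewrite oppr_eq0 oner_eq0.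
have [z hz] := @fac_in_m (map_poly polyC) _ (fun c => map_polyC _ _) w0 mw.
by exists z; move: hz; rewrite /= map_polyXsubC.
Qed.

Lemma N3 : exists x0 y0, forall g, m g <-> ev x0 y0 g = 0.
Proof.
have [x0 mx] := N1; have [y0 my] := N2 mx.
exists x0, y0 => g; have [A [B e]] := decomp x0 y0 g; split.
  move=> mg; apply/eqP; apply: contraT => nz; case: (m_cc nz).
  have -> : cc (ev x0 y0 g) = g - (xt x0 * A + ('X - cc y0) * B).
    by rewrite [in RHS]e addrC addKr.
  by apply: (mB hm) => //; apply: (mD hm); apply: (mMr hm).
move=> h; rewrite e h /cc !polyC0 addr0.
by apply: (mD hm); apply: (mMr hm).
Qed.

End Null.



Section Core.
Variable K : closedFieldType.
Hypothesis hchar : [pchar K] =i pred0.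
Local Notation S := {poly {poly K}}.
Variable D : S -> S.
Hypothesis hDB : forall f g, D (f - g) = D f - D g.
Hypothesis hDM : forall f g, D (f * g) = g * D f + f * D g.
Hypothesis hDc : forall c, D (cc c) = 0.
Variables x0 y0 : K.
Local Notation E := (ev x0 y0).
Hypothesis hDx : E (D xX) != 0.

Lemma D0 : D 0 = 0. Proof. by move: (hDB 0 0); rewrite !subrr. Qed.
Lemma DN f : D (- f) = - D f. Proof. by rewrite -sub0r hDB D0 sub0r. Qed.
Lemma DD f g : D (f + g) = D f + D g. Proof. by rewrite -(opprK g) hDB !DN !opprK. Qed.

Definition Dk n := iter n D.
Lemma DkB n f g : Dk n (f - g) = Dk n f - Dk n g.
Proof. by elim: n => //= n IH; rewrite IH hDB. Qed.
Lemma Dk0 n : Dk n 0 = 0. Proof. by move: (DkB n 0 0); rewrite !subrr. Qed.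
Lemma DkN n f : Dk n (- f) = - Dk n f. Proof. by rewrite -sub0r DkB Dk0 sub0r. Qed.
Lemma DkD n f g : Dk n (f + g) = Dk n f + Dk n g. Proof. by rewrite -(opprK g) DkB !DkN !opprK. Qed.
Lemma DkS n f : Dk n (D f) = Dk n.+1 f. Proof. by rewrite /Dk iterSr. Qed.

Definition P g := forall k, E (Dk k g) = 0.

Lemma P0 : P 0. Proof. by move=> k; rewrite Dk0 ev0. Qed.
Lemma PB a b : P a -> P b -> P (a - b).
Proof. by move=> ha hb k; rewrite DkB evB ha hb subrr. Qed.
Lemma PD a b : P a -> P b -> P (a + b).
Proof. by move=> ha hb k; rewrite DkD evD ha hb addr0. Qed.
Lemma P_D a : P a -> P (D a).
Proof. by move=> ha k; rewrite DkS. Qed.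
Lemma PM r a : P a -> P (r * a).
Proof.
move=> ha k; elim: k r a ha => [|k IH] r a ha.
  by rewrite /= evM (ha 0%N) mulr0.
by rewrite -DkS hDM (mulrC a) DkD evD (IH _ _ ha) (IH _ _ (P_D ha)) addr0.
Qed.
Lemma PMr r a : P a -> P (a * r). Proof. by rewrite mulrC; apply: PM. Qed.

Lemma leib n : forall i g h, (i <= n)%N ->
  (forall l, (l < i)%N -> E (Dk l g) = 0) ->
  (forall l, (l < n - i)%N -> E (Dk l h) = 0) ->
  E (Dk n (g * h)) = 'C(n, i)%:R * E (Dk i g) * E (Dk (n - i) h).
Proof.
elim: n => [|n IH] i g h.
  by rewrite leqn0 => /eqP -> _ _; rewrite /= evM bin0 mul1r.
move=> le hg hh.
rewrite -DkS hDM DkD evD (mulrC h).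
case: i le hg hh => [|i] le hg hh.
  have c1 : forall l, (l < n - 0)%N -> E (Dk l h) = 0.
    by move=> l lt; apply: hh; rewrite subn0 in lt *; rewrite ltnS ltnW.
  rewrite (IH 0%N (D g) h) //.
  rewrite !subn0 (hh n) ?subn0 // mulr0 add0r.
  have c2 : forall l, (l < n - 0)%N -> E (Dk l (D h)) = 0.
    by move=> l lt; rewrite DkS; apply: hh; rewrite !subn0 in lt *.
  rewrite (IH 0%N g (D h)) //.
  by rewrite !bin0 !subn0 DkS.
have T1 : E (Dk n (D g * h)) = 'C(n, i)%:R * E (Dk i.+1 g) * E (Dk (n.+1 - i.+1) h).
  have c1 : forall l, (l < i)%N -> E (Dk l (D g)) = 0.
    by move=> l lt; rewrite DkS; apply: hg.
  have c2 : forall l, (l < n - i)%N -> E (Dk l h) = 0.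
    by move=> l lt; apply: hh; rewrite subSS.
  by rewrite (IH i (D g) h) // DkS subSS.
have T2 : E (Dk n (g * D h)) = 'C(n, i.+1)%:R * E (Dk i.+1 g) * E (Dk (n.+1 - i.+1) h).
  case: (leqP i.+1 n) => le2.
    have c2 : forall l, (l < n - i.+1)%N -> E (Dk l (D h)) = 0.
      move=> l lt; rewrite DkS; apply: hh; lia.
    by rewrite (IH i.+1 g (D h)) // DkS subSn.
  have ein : i = n by lia.
  subst i.
  have c3 : forall l, (l < n)%N -> E (Dk l g) = 0 by move=> l lt; apply: hg; rewrite ltnS ltnW.
  rewrite (IH n g (D h)) // ?subnn //.
  by rewrite (hg n) // (bin_small (ltnSn n)) !mulr0 !mul0r.
apply: (etrans (congr2 (fun a b => a + b) T1 T2)).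
by rewrite -mulrDl -mulrDl -natrD addnC binS.
Qed.


Lemma natK0 n : (n%:R : K) != 0 -> True. Proof. by []. Qed.
Lemma natK_neq0 n : (n != 0)%N -> (n%:R : K) != 0.
Proof. by rewrite ((pcharf0P K).1 hchar). Qed.

Lemma firstnz g : ~ P g -> exists i, E (Dk i g) != 0 /\ forall l, (l < i)%N -> E (Dk l g) = 0.
Proof.
move=> nP.
have ex : exists i, E (Dk i g) != 0.
  apply: NNPP => h; apply: nP => k; apply/eqP; apply: contraT => nz; case: h; by exists k.
have [i [hi imin]] := cmin ex; exists i; split => // l lt; apply/eqP; apply: contraT => nz.
by have := imin l nz; rewrite leqNgt lt.
Qed.

Lemma P_prime g h : P (g * h) -> P g \/ P h.
Proof.
move=> Pgh; apply: NNPP => nn.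
have ng : ~ P g by move=> hg; apply: nn; left.
have nh : ~ P h by move=> hh; apply: nn; right.
have [i [gi gmin]] := firstnz ng; have [j [hj hmin]] := firstnz nh.
have := leib (leq_addr j i) gmin; rewrite addKn => /(_ h hmin).
rewrite Pgh => /esym /eqP; rewrite !mulf_eq0 (negbTE gi) (negbTE hj) !orbF.
by rewrite (negbTE (natK_neq0 _)) // -lt0n bin_gt0 leq_addr.
Qed.

Lemma Dpow a n : D (a ^+ n.+1) = a ^+ n * D a *+ n.+1.
Proof.
elim: n => [|n IH]; first by rewrite expr1 expr0 mul1r.
by rewrite exprS hDM IH mulrnAr mulrA -exprS (mulrSr _ n.+1) addrC.
Qed.

Lemma Dxt : D (xt x0) = D xX.
Proof. by rewrite /xt polyCB hDB -/(cc x0) hDc subr0. Qed.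

Lemma lemL (s : {poly K}) : s != 0 -> ~ P s%:P.
Proof.
move=> s0 Ps.
have [N0 [q hq es]] := multiplicity_XsubC s x0.
have ex : exists N, exists e, E e != 0 /\ P (e * xt x0 ^+ N).
  exists N0, q%:P; split.
    by rewrite /ev evx_C hornerC; rewrite s0 in hq.
  by rewrite /xt -rmorphXn -rmorphM -es.
have [N [[e [Ee Pe]] Nmin]] := cmin ex.
case: N Pe Nmin => [|N] Pe Nmin.
  by move: (Pe 0%N); rewrite expr0 mulr1 /= => /eqP; rewrite (negbTE Ee).
pose e' := e * e * D (xt x0) *+ N.+1.
have Pe' : P (e' * xt x0 ^+ N).
  have -> : e' * xt x0 ^+ N = e * D (e * xt x0 ^+ N.+1) - D e * (e * xt x0 ^+ N.+1).
    rewrite hDM Dpow mulrDr /e'; ring.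
  by apply: PB; apply: PM => //; apply: P_D.
suff : (N.+1 <= N)%N by rewrite ltnn.
apply: Nmin; exists e'; split => //.
have -> : e' = cc (N.+1)%:R * (e * e * D (xt x0)).
  by rewrite /e' /cc -mulr_natl !rmorph_nat.
by rewrite !evM ev_cc Dxt !mulf_neq0 // natK_neq0.
Qed.


Variables rho rho' : S -> S.
Hypothesis rB : forall f g, rho (f - g) = rho f - rho g.
Hypothesis rM : forall f g, rho (f * g) = rho f * rho g.
Hypothesis rK : forall g, rho (rho' g) = g.
Hypothesis rK' : forall g, rho' (rho g) = g.
Hypothesis hcomm : forall f, rho (D f) = D (rho f).
Hypothesis hev : forall g, E (rho g) = E g.

Lemma r0 : rho 0 = 0. Proof. by move: (rB 0 0); rewrite !subrr. Qed.
Lemma r'M f g : rho' (f * g) = rho' f * rho' g.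
Proof. by rewrite -{1}(rK f) -{1}(rK g) -rM rK'. Qed.
Lemma comm' f : rho' (D f) = D (rho' f).
Proof. by rewrite -{1}(rK f) -hcomm rK'. Qed.
Lemma ev' g : E (rho' g) = E g.
Proof. by rewrite -{2}(rK g) hev. Qed.

Lemma Dk_rho k g : Dk k (rho g) = rho (Dk k g).
Proof. by elim: k => //= k ->; rewrite hcomm. Qed.
Lemma Dk_rho' k g : Dk k (rho' g) = rho' (Dk k g).
Proof. by elim: k => //= k ->; rewrite comm'. Qed.
Lemma P_rho g : P g -> P (rho g).
Proof. by move=> h k; rewrite Dk_rho hev. Qed.
Lemma P_rho' g : P g -> P (rho' g).
Proof. by move=> h k; rewrite Dk_rho' ev'. Qed.
Lemma P_sub g : P (rho g - g).
Proof. by move=> k; rewrite DkB evB Dk_rho hev subrr. Qed.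

Section Pi.
Variable pi : S.
Hypothesis pi1 : forall c, evx c pi != 0.
Hypothesis pi0 : pi != 0.

Lemma cancel_pi (A : {poly K}) h q : A != 0 -> A%:P * h = q * pi -> exists q', h = q' * pi.
Proof.
elim: (size A) {-2}A (leqnn (size A)) h q => [|n IH] {}A sA h q A0 e.
  by move: sA; rewrite leqn0 size_poly_eq0 (negbTE A0).
case: (eqVneq (size A) 1%N) => s1.
  have eA : A = (A`_0)%:P by apply: size1_polyC; rewrite s1.
  have a0 : A`_0 != 0 by apply: contra A0 => /eqP h0; rewrite eA h0.
  by exists (cc (A`_0)^-1 * q); rewrite -mulrA -e {2}eA mulrA /cc -!polyCM mulVf // mul1r.
have [c /factor_theorem [A' eA]] : exists c, root A c by apply/closed_rootP.
have : evx c q * evx c pi = 0 by rewrite -evxMM -e evxMM evx_C eA hornerM hornerXsubC subrr mulr0 mul0r.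
move/eqP; rewrite mulf_eq0 (negbTE (pi1 c)) orbF => /eqP /fac_x [q1 eq1].
have A'0 : A' != 0 by apply: contra A0 => /eqP h0; rewrite eA h0 mul0r.
have e' : A'%:P * h = q1 * pi.
  apply: (mulfI (_ : xt c != 0)); first by rewrite /xt polyC_eq0 polyXsubC_eq0.
  by rewrite mulrA -polyCM (mulrC ('X - c%:P)) -eA e eq1 mulrA.
apply: (IH A' _ _ _ A'0 e').
by move: sA; rewrite eA size_mul ?polyXsubC_eq0 // size_XsubC addn2 ltnS.
Qed.
End Pi.

Theorem core_main : exists f : S,
  (forall g, principal_ideal f g -> E g = 0) /\
  (forall g, principal_ideal f g -> principal_ideal f (D g)) /\
  (forall g, image_set rho (principal_ideal f) g <-> principal_ideal f g) /\
  (forall g, principal_ideal f (rho g - g)).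
Proof.
case: (classic (forall g, P g -> g = 0)) => [P00|].
  exists 0; split; [|split; [|split]].
  - by move=> g [h ->]; rewrite mulr0 ev0.
  - by move=> g [h ->]; exists 0; rewrite !mulr0 D0.
  - move=> g; split.
      by move=> [_ [[h ->] <-]]; exists 0; rewrite !mulr0 r0.
    move=> [h ->]; exists 0; split; first by exists 0; rewrite mulr0.
    by rewrite !mulr0 r0.
  - by move=> g; exists 0; rewrite mulr0; apply: P00; apply: P_sub.
move=> nP.
have ex1 : exists n, exists g, P g /\ g != 0 /\ size g = n.
  apply: NNPP => h; apply: nP => g Pg; apply/eqP; apply: contraT => nz; case: h.
  by exists (size g), g.
have [n0 [[g1 [Pg1 [g10 sg1]]] n0min]] := cmin ex1.
have ex2 : exists d, exists g, P g /\ g != 0 /\ size g = n0 /\ size (lead_coef g) = d.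
  by exists (size (lead_coef g1)), g1.
have [d0 [[pi [Ppi [pi0 [spi lpi]]]] d0min]] := cmin ex2.
have pi1 : forall c, evx c pi != 0.
  move=> c; apply/negP => /eqP /fac_x [pi' epi].
  have xc0 : ('X - c%:P : {poly K}) != 0 by rewrite polyXsubC_eq0.
  have Ppi' : P pi'.
    move: Ppi; rewrite epi => /P_prime [|//].
    by move/(lemL xc0).
  have pi'0 : pi' != 0 by apply: contra pi0 => /eqP h0; rewrite epi h0 mulr0.
  have hle : (d0 <= size (lead_coef pi'))%N.
    apply: d0min; exists pi'; do 3! split => //.
    by rewrite -spi epi size_Cmul.
  have : size (lead_coef pi) = (size (lead_coef pi')).+1.
    rewrite epi lead_coefM lead_coefC size_mul ?lead_coef_eq0 //.
    by rewrite size_XsubC.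
  by rewrite lpi => e; move: hle; rewrite e ltnn.
have pi2 : forall h, P h -> exists q, h = q * pi.
  move=> h Ph.
  have e := Pdiv.ComRing.rdivp_eq pi h.
  set k := Pdiv.Ring.rscalp h pi in e.
  set q := Pdiv.Ring.rdivp h pi in e.
  set r := Pdiv.Ring.rmodp h pi in e.
  have Pr : P r.
    have -> : r = (lead_coef pi ^+ k)%:P * h - q * pi by rewrite mul_polyC e addrC addKr.
    by apply: PB; apply: PM.
  have r0 : r = 0.
    apply/eqP; apply: contraT => rn.
    have := n0min (size r) (ex_intro _ r (conj Pr (conj rn erefl))).
    by rewrite leqNgt -spi (Pdiv.Ring.ltn_rmodpN0 _ pi0).
  move: e; rewrite r0 addr0 -mul_polyC => e.
  apply: (cancel_pi pi1 _ e).
  by rewrite expf_neq0 // lead_coef_eq0.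
exists pi; split; [|split; [|split]].
- by move=> g [h ->]; apply: (PM h Ppi 0%N).
- by move=> g [h ->]; apply: pi2; apply: P_D; apply: PM.
- move=> g; split.
    move=> [_ [[h ->] <-]]; have [q eq] := pi2 _ (P_rho Ppi).
    by exists (rho h * q); rewrite rM eq mulrA.
  move=> [h ->]; have [q eq] := pi2 _ (P_rho' Ppi).
  exists (rho' h * q * pi); split; first by exists (rho' h * q).
  by rewrite !rM rK -mulrA -rM -eq rK.
- by move=> g; apply: pi2; apply: P_sub.
Qed.

End Core.



Section Iso.
Variable K : closedFieldType.
Local Notation S := {poly {poly K}}.
Local Notation M := {mpoly K[2]}.
Variables i j : 'I_2.
Hypothesis ij : i != j.

Definition Phi : M -> S :=
  mmap (polyC \o polyC) (fun k => if k == i then xX else 'X).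
Definition psi : {poly K} -> M := horner_eval 'X_i \o map_poly (@mpolyC 2 K).
Definition Psi : S -> M := horner_eval 'X_j \o map_poly psi.
HB.instance Definition _ := GRing.RMorphism.on Phi.
HB.instance Definition _ := GRing.RMorphism.on psi.
HB.instance Definition _ := GRing.RMorphism.on Psi.

Lemma Phi_X k : Phi 'X_k = if k == i then xX else 'X.
Proof. by rewrite /Phi mmapX mmap1U. Qed.
Lemma Phi_C c : Phi c%:MP = cc c.
Proof. by rewrite /Phi mmapC. Qed.
Lemma psi_C c : psi c%:P = c%:MP.
Proof. by rewrite /psi /= map_polyC /= /horner_eval hornerC. Qed.
Lemma psi_X : psi 'X = 'X_i.
Proof. by rewrite /psi /= map_polyX /horner_eval hornerX. Qed.
Lemma Psi_C c : Psi c%:P = psi c.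
Proof. by rewrite /Psi /= map_polyC /horner_eval hornerC. Qed.
Lemma Psi_X : Psi 'X = 'X_j.
Proof. by rewrite /Psi /= map_polyX /horner_eval hornerX. Qed.
Lemma Psi_cc c : Psi (cc c) = c%:MP.
Proof. by rewrite /cc Psi_C psi_C. Qed.
Lemma Psi_xX : Psi xX = 'X_i.
Proof. by rewrite /xX Psi_C psi_X. Qed.

Lemma PhiPsi y : Phi (Psi y) = y.
Proof.
have hc : forall c : {poly K}, Phi (psi c) = c%:P.
  elim/poly_ind => [|p a IH]; first by rewrite !rmorph0.
  rewrite rmorphD rmorphM /= psi_X psi_C rmorphD rmorphM /= IH Phi_X eqxx Phi_C.
  by rewrite /xX /cc rmorphD rmorphM.
elim/poly_ind: y => [|p c IH]; first by rewrite !rmorph0.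
rewrite rmorphD rmorphM /= Psi_X Psi_C rmorphD rmorphM /= IH hc Phi_X.
by rewrite eq_sym (negbTE ij).
Qed.

Lemma PsiPhi x : Psi (Phi x) = x.
Proof.
have hX : forall k, Psi (Phi 'X_k) = 'X_k.
  move=> k; rewrite Phi_X; case: eqP => [->|/eqP ki]; first exact: Psi_xX.
  rewrite Psi_X; congr 'X_ _; apply/val_inj; move: ki ij; rewrite -!val_eqE /=.
  by case: i j k => [[|[|?]] ?] [[|[|?]] ?] [[|[|?]] ?].
elim/mpolyind: x => [|c m p _ _ IH]; first by rewrite !rmorph0.
rewrite rmorphD /= rmorphD /= IH -mul_mpolyC rmorphM rmorphM /= Phi_C Psi_cc.
congr (_ * _ + _); rewrite mpolyXE_id !rmorph_prod; apply: eq_bigr => k _.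
by rewrite !rmorphXn /= hX.
Qed.

End Iso.



Definition Concl (R : comRingType) (D rho : R -> R) (m : R -> Prop) :=
  exists f : R,
    (forall g, principal_ideal f g -> m g) /\
    (forall g, principal_ideal f g -> principal_ideal f (D g)) /\
    (forall g, image_set rho (principal_ideal f) g <-> principal_ideal f g) /\
    (forall g, principal_ideal f (rho g - g)).

Section Transfer.
Variables (R1 R2 : comRingType) (Phi : {rmorphism R1 -> R2}) (Psi : {rmorphism R2 -> R1}).
Hypothesis PP : forall y, Phi (Psi y) = y.
Hypothesis QQ : forall x, Psi (Phi x) = x.
Variables (D rho : R1 -> R1) (m : R1 -> Prop).
Let D2 y := Phi (D (Psi y)).
Let rho2 y := Phi (rho (Psi y)).
Let m2 y := m (Psi y).

Lemma transfer : Concl D2 rho2 m2 -> Concl D rho m.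
Proof.
case=> f [ha [hb [hc hd]]]; exists (Psi f); split; [|split; [|split]].
- move=> g [h eg]; rewrite -(QQ g); apply: ha; exists (Phi h).
  by rewrite eg rmorphM /= PP.
- move=> g [h eg].
  have pg : principal_ideal f (Phi g) by exists (Phi h); rewrite eg rmorphM /= PP.
  have [k ek] := hb (Phi g) pg.
  exists (Psi k); rewrite /D2 QQ in ek; by rewrite -(QQ (D g)) ek rmorphM.
- move=> g; split.
    move=> [_ [[h ->] <-]].
    have : image_set rho2 (principal_ideal f) (Phi (rho (h * Psi f))).
      exists (Phi h * f); split; first by exists (Phi h).
      by rewrite /rho2 rmorphM /= QQ.
    case/hc => k ek; exists (Psi k); by rewrite -rmorphM -ek QQ.
  move=> [h eg].
  have : principal_ideal f (Phi g) by exists (Phi h); rewrite eg rmorphM /= PP.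
  case/hc => y [[k ->] ey]; exists (Psi k * Psi f); split; first by exists (Psi k).
  by rewrite -rmorphM -(QQ g) -ey /rho2 QQ.
- move=> g; have [k ek] := hd (Phi g); exists (Psi k).
  by rewrite -rmorphM -ek rmorphB /rho2 /= !QQ.
Qed.

Lemma transfer_max : is_maximal_ideal m -> is_maximal_ideal m2.
Proof.
case=> [[h0 hD hM] h1 hmax]; split.
- split; first by rewrite /m2 rmorph0.
    by move=> a b ha hb; rewrite /m2 rmorphD; auto.
  by move=> r a ha; rewrite /m2 rmorphM; auto.
- by rewrite /m2 rmorph1.
move=> J [J0 JD JM] mJ.
have JI : is_ideal (fun x => J (Phi x)).
  split; first by rewrite rmorph0.
    by move=> a b ha hb; rewrite rmorphD; auto.
  by move=> r a ha; rewrite rmorphM; auto.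
have mJ' : forall x, m x -> J (Phi x) by move=> x hx; apply: mJ; rewrite /m2 QQ.
case: (hmax _ JI mJ') => h; [left|right] => y; rewrite -(PP y) ?h /m2 ?QQ //.
Qed.

Lemma transfer_img : (forall g, image_set rho m g <-> m g) ->
  forall g, image_set rho2 m2 g <-> m2 g.
Proof.
move=> H g; split.
  move=> [z [mz <-]]; rewrite /m2 /rho2 QQ; apply/H; by exists (Psi z).
move=> /H [w [mw ew]]; exists (Phi w); split; first by rewrite /m2 QQ.
by rewrite /rho2 QQ ew PP.
Qed.
End Transfer.

Section SMain.
Variable K : closedFieldType.
Hypothesis hchar : [pchar K] =i pred0.
Local Notation S := {poly {poly K}}.
Variable D : S -> S.
Hypothesis hDB : forall f g, D (f - g) = D f - D g.
Hypothesis hDM : forall f g, D (f * g) = g * D f + f * D g.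
Hypothesis hDc : forall c, D (cc c) = 0.
Variable m : S -> Prop.
Hypothesis hm : is_maximal_ideal m.

Lemma stab : m (D xX) -> m (D 'X) -> forall g, m g -> m (D g).
Proof.
move=> mx my g mg.
have [x0 [y0 hN]] := N3 hchar hm.
have [A [B e]] := decomp x0 y0 g.
have Eg : ev x0 y0 g = 0 by apply/hN.
rewrite e Eg /cc !polyC0 addr0 -/(cc 0).
have Dc0 : D 0 = 0 by move: (hDB 0 0); rewrite !subrr.
have DD : forall f g, D (f + g) = D f + D g.
  move=> f h; have DN : forall u, D (- u) = - D u by move=> u; rewrite -sub0r hDB Dc0 sub0r.
  by rewrite -(opprK h) hDB !DN !opprK.
rewrite DD !hDM; apply/hN; rewrite !evD !evM.
rewrite ev_xt ev_yt /xt polyCB hDB -/(cc x0) hDc subr0 hDB hDc subr0.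
have -> : ev x0 y0 (D xX) = 0 by apply/hN.
have -> : ev x0 y0 (D 'X) = 0 by apply/hN.
by rewrite !mulr0 !mul0r !addr0.
Qed.

Variables rho rho' : S -> S.
Hypothesis rB : forall f g, rho (f - g) = rho f - rho g.
Hypothesis rM : forall f g, rho (f * g) = rho f * rho g.
Hypothesis rC : forall c, rho (cc c) = cc c.
Hypothesis rK : forall g, rho (rho' g) = g.
Hypothesis rK' : forall g, rho' (rho g) = g.
Hypothesis hcomm : forall f, rho (D f) = D (rho f).
Hypothesis hrhom : forall g, image_set rho m g <-> m g.
Hypothesis hx : ~ m (D xX).

Lemma S_main : Concl D rho m.
Proof.
have [x0 [y0 hN]] := N3 hchar hm.
have hev : forall g, ev x0 y0 (rho g) = ev x0 y0 g.
  move=> g; have : m (g - cc (ev x0 y0 g)) by apply/hN; rewrite evB ev_cc subrr.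
  move=> h1; have : m (rho (g - cc (ev x0 y0 g))) by apply/hrhom; exists (g - cc (ev x0 y0 g)).
  move/hN; rewrite rB rC evB ev_cc => /eqP; rewrite subr_eq0 => /eqP.
  done.
have hDx : ev x0 y0 (D xX) != 0 by apply/eqP => /hN.
have [f [ha [hb [hc hd]]]] := core_main hchar hDB hDM hDc hDx rB rM rK rK' hcomm hev.
exists f; split; [|split; [|split]] => //.
by move=> g /ha /hN.
Qed.
End SMain.



Section Final.
Variable K : closedFieldType.
Hypothesis hchar : [pchar K] =i pred0.
Local Notation M := {mpoly K[2]}.
Local Notation S := {poly {poly K}}.
Variable D : {linear M -> M}.
Hypothesis hD : is_derivation D.
Variable rho : {lrmorphism M -> M}.
Variable rho' : M -> M.
Hypothesis rK' : cancel rho rho'.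
Hypothesis rK : cancel rho' rho.
Hypothesis hcomm : forall f, rho (D f) = D (rho f).
Variable m : M -> Prop.
Hypothesis hm : is_maximal_ideal m.
Hypothesis hrhom : forall g, image_set rho m g <-> m g.

Lemma D1 : D 1 = 0.
Proof.
have e := hD 1 1; rewrite mulr1 mul1r in e.
by apply: (@addrI _ (D 1)); rewrite addr0 -e.
Qed.

Lemma DcM c : D c%:MP = 0.
Proof. by rewrite -alg_mpolyC linearZ /= D1 scaler0. Qed.
Lemma rhoC c : rho c%:MP = c%:MP.
Proof. by rewrite -alg_mpolyC linearZ /= rmorph1. Qed.

Section Red.
Variables i j : 'I_2.
Hypothesis ij : i != j.
Let Ph := Phi i : {rmorphism M -> S}.
Let Ps := Psi i j : {rmorphism S -> M}.
Let PP : forall y, Ph (Ps y) = y := @PhiPsi K i j ij.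
Let QQ : forall x, Ps (Ph x) = x := @PsiPhi K i j ij.
Let D2 y := Ph (D (Ps y)).
Let rho2 y := Ph (rho (Ps y)).
Let rho2' y := Ph (rho' (Ps y)).
Let m2 y := m (Ps y).

Lemma D2B f g : D2 (f - g) = D2 f - D2 g.
Proof. by rewrite /D2 !rmorphB /= linearB rmorphB. Qed.
Lemma D2M f g : D2 (f * g) = g * D2 f + f * D2 g.
Proof. by rewrite /D2 rmorphM hD rmorphD !rmorphM /= !PP. Qed.
Lemma D2c c : D2 (cc c) = 0.
Proof. by rewrite /D2 /Ps /= Psi_cc DcM rmorph0. Qed.
Lemma r2B f g : rho2 (f - g) = rho2 f - rho2 g.
Proof. by rewrite /rho2 !rmorphB. Qed.
Lemma r2M f g : rho2 (f * g) = rho2 f * rho2 g.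
Proof. by rewrite /rho2 !rmorphM. Qed.
Lemma r2C c : rho2 (cc c) = cc c.
Proof. by rewrite /rho2 /Ps /= Psi_cc rhoC /Ph /= Phi_C. Qed.
Lemma r2K g : rho2 (rho2' g) = g.
Proof. by rewrite /rho2 /rho2' QQ rK PP. Qed.
Lemma r2K' g : rho2' (rho2 g) = g.
Proof. by rewrite /rho2 /rho2' QQ rK' PP. Qed.
Lemma comm2 f : rho2 (D2 f) = D2 (rho2 f).
Proof. by rewrite /rho2 /D2 !QQ hcomm. Qed.

Lemma red : ~ m (D 'X_i) -> Concl D rho m.
Proof.
move=> nx; apply: (transfer PP QQ).
apply: (S_main hchar D2B D2M D2c (transfer_max PP QQ hm) r2B r2M r2C r2K r2K' comm2).
  exact: transfer_img.
by rewrite /m2 /D2 QQ /Ps /= Psi_xX.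
Qed.

Lemma stabM : m (D 'X_i) -> m (D 'X_j) -> forall g, m g -> m (D g).
Proof.
move=> mi mj g mg.
have := stab hchar D2B D2M D2c (transfer_max PP QQ hm).
rewrite /m2 /D2 !QQ /Ps /= Psi_xX Psi_X => /(_ mi mj (Ph g)).
by rewrite !QQ; apply.
Qed.
End Red.

Lemma final (hDm : ~ (forall g, m g -> m (D g))) : Concl D rho m.
Proof.
have h01 : (ord0 : 'I_2) != ord_max by [].
have h10 : (ord_max : 'I_2) != ord0 by [].
case: (classic (m (D 'X_ord0))) => [m0|n0]; last exact: (red h01 n0).
case: (classic (m (D 'X_ord_max))) => [m1|n1]; last exact: (red h10 n1).
by case: hDm; apply: (stabM h01).
Qed.
End Final.

Theorem lemma2p1 (K : closedFieldType) (hchar : [pchar K] =i pred0)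
  (D : {linear {mpoly K[2]} -> {mpoly K[2]}})
  (hD : is_derivation D)
  (rho : {lrmorphism {mpoly K[2]} -> {mpoly K[2]}})
  (hrho_bij : bijective rho)
  (hcomm : forall f, rho (D f) = D (rho f))
  (m : {mpoly K[2]} -> Prop)
  (hm : is_maximal_ideal m)
  (hrhom : forall g, image_set rho m g <-> m g)
  (hDm : ~ (forall g, m g -> m (D g))) :
  exists f : {mpoly K[2]},
    (forall g, principal_ideal f g -> m g) /\
    (forall g, principal_ideal f g -> principal_ideal f (D g)) /\
    (forall g, image_set rho (principal_ideal f) g <-> principal_ideal f g) /\
    (forall g, principal_ideal f (rho g - g)).
Proof.
case: hrho_bij => rho' rK' rK.
exact: (final hchar hD rK' rK hcomm hm hrhom hDm).
Qed.
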